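(* Let $I=[0,1]$ with Lebesgue measure and let $W$ be a graphon on $I$. Let $\gamma:I\to I$ be a measure-preserving transformation satisfying $W(\gamma(x),\gamma(y))=W(x,y)$. Then $\gamma$ acts on $\mathcal M^I$ by $\mu\mapsto\mu\circ\gamma$ (that is, $x\mapsto\mu(\gamma(x))$), this map sends $\mathcal M^I$ into $\mathcal M^I$, and it is a symmetry of the mean-field graphon system: it maps solutions of the mean-field graphon system to solutions.
   Context: Let $\mathbb T=\mathbb{R}/\mathbb{Z}$, $\mathcal M$ the set of Borel probability measures on $\mathbb T$, and $\mathcal M^I$ the set of maps $I\to\mathcal M$ such that preimages of open sets are measurable. Given a continuous $t\mapsto\mu(\cdot,t)\in\mathcal M^I$ and $x\in I$, let $\Phi(\mu,x,t,\cdot):\mathbb T\to\mathbb T$ be the flow of $\dot u(t)=\int_I W(x,y)\int_{\mathbb T}\sin(v-u(t))\,d\mu(y,t)(v)\,dy$. The mean-field graphon system is $\mu(x,t)=\Phi(\mu,x,t,\cdot)\#\mu(x,0)$, $\mu(x,0)=\mu_0(x)$ with $\mu_0\in\mathcal M^I$, required for every $t\in\mathbb{R}$ and almost every $x\in I$; $\#$ denotes push-forward of measures. *)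

(* Defs.v *)
From HB Require Import structures.
From mathcomp Require Import all_boot all_order all_algebra.
From mathcomp Require Import all_classical all_reals all_analysis.
Set Implicit Arguments. Unset Strict Implicit. Unset Printing Implicit Defensive.
Import Order.TTheory GRing.Theory Num.Theory.
Import numFieldNormedType.Exports.
Local Open Scope classical_set_scope.
Local Open Scope ring_scope.

Section MFG.
Variable R : realType.

(* The interval I = [0,1] as a subset of R (Lebesgue measure = lebesgue_measure
   restricted to it; measurable = Borel measurable). *)
Definition Iset : set R := `[0, 1]%classic.

(* The circle T is represented by the fundamental domain [0, 2*pi) of R. *)
Definition period : R := 2 * pi.
Definition Tset : set R := `[0, period[%classic.
Definition modT (z : R) : R := z - period * (Num.floor (z / period))%:~R.

(* Points of M: Borel probability measures on T, i.e. probability measures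
   on R concentrated on the fundamental domain. *)
Definition Meas := probability R R.
Definition onT (P : Meas) : Prop := P (~` Tset) = 0%E.

(* continuous functions on T = continuous period-periodic functions on R *)
Definition contT (f : R -> R) : Prop :=
  continuous f /\ forall z, f (z + period) = f z.

Definition weak_open (S : set Meas) : Prop :=
  forall P, onT P -> S P ->
    exists (fs : seq (R -> R)) (eps : R), 0 < eps /\ (forall f, f \in fs -> contT f) /\
      forall Q, onT Q ->
        (forall f, f \in fs ->
           `| Rintegral Q setT f - Rintegral P setT f | < eps) -> S Q.

Definition in_MI (mu : R -> Meas) : Prop :=
  (forall x, Iset x -> onT (mu x)) /\
  forall S, weak_open S -> measurable (Iset `&` mu @^-1` S).

Definition graphon (W : R -> R -> R) : Prop :=
  measurable_fun (Iset `*` Iset) (fun p : R * R => W p.1 p.2) /\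
  (forall x y, Iset x -> Iset y -> W x y = W y x) /\
  (forall x y, Iset x -> Iset y -> 0 <= W x y <= 1).

Definition measure_preserving (g : R -> R) : Prop :=
  (forall x, Iset x -> Iset (g x)) /\
  measurable_fun Iset g /\
  forall A, measurable A -> A `<=` Iset ->
    lebesgue_measure (Iset `&` g @^-1` A) = lebesgue_measure A.

Definition vfield (W : R -> R -> R) (mu : R -> R -> Meas) (x t u : R) : R :=
  Rintegral lebesgue_measure Iset
    (fun y => W x y * Rintegral (mu y t) setT (fun v => sin (v - u))).

Definition is_traj (W : R -> R -> R) (mu : R -> R -> Meas) (x u0 : R) (u : R -> R) : Prop :=
  u 0 = u0 /\ forall t : R, is_derive t (1 : R) u (vfield W mu x t (u t)).

(* Phi(mu, x, t, u0) = z (on the lift R of T):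
   the solution starting at u0 exists and every such solution has value z at t *)
Definition flow_at (W : R -> R -> R) (mu : R -> R -> Meas) (x t u0 : R) (z : R) : Prop :=
  (exists u, is_traj W mu x u0 u) /\ forall u, is_traj W mu x u0 u -> u t = z.

Definition weak_cont (mu : R -> R -> Meas) : Prop :=
  forall x, Iset x -> forall f, contT f ->
    continuous (fun t => Rintegral (mu x t) setT f).

Definition mfg_solution (W : R -> R -> R) (mu0 : R -> Meas) (mu : R -> R -> Meas) : Prop :=
  in_MI mu0 /\
  (forall t, in_MI (fun x => mu x t)) /\
  weak_cont mu /\
  {ae lebesgue_measure, forall x, Iset x -> mu x 0 = mu0 x} /\
  forall t, {ae lebesgue_measure, forall x, Iset x ->
    exists Phi : R -> R,
      (forall u0, flow_at W mu x t u0 (Phi u0)) /\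
      forall A, measurable A ->
        mu x t A = mu0 x ((fun u0 => modT (Phi u0)) @^-1` A)}.

End MFG.

(* Main.v *)
Require Import Defs.
From HB Require Import structures.
From mathcomp Require Import all_boot all_order all_algebra.
From mathcomp Require Import all_classical all_reals all_analysis.
From mathcomp Require Import measurable_realfun.
From mathcomp Require Import ring lra.
Set Implicit Arguments. Unset Strict Implicit. Unset Printing Implicit Defensive.
Import Order.TTheory GRing.Theory Num.Theory.
Import numFieldNormedType.Exports.
Local Open Scope classical_set_scope.
Local Open Scope ring_scope.

Section H.
Variable R : realType.
Local Notation I := (@Iset R).

Lemma mI : measurable (@Iset R).
Proof. exact: measurable_itv. Qed.

Lemma notI2 : ~ (@Iset R) 2.
Proof. rewrite /Iset /= in_itv /= => /andP[_]; lra. Qed.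

Lemma in_MI_comp (g : R -> R) (mu : R -> Meas R) :
  measure_preserving g -> in_MI mu -> in_MI (fun x => mu (g x)).
Proof.
move=> [gI [mg _]] [h1 h2]; split.
  by move=> x Ix; apply: h1; apply: gI.
move=> S wS.
have -> : I `&` (fun x => mu (g x)) @^-1` S = I `&` g @^-1` (I `&` mu @^-1` S).
  apply/seteqP; split => x /= [Ix Sx]; split => //.
    by split => //; apply: gI.
  by case: Sx.
apply: mg; first exact: mI.
exact: h2.
Qed.

Lemma ae_comp (g : R -> R) (P Q : R -> Prop) :
  measure_preserving g -> (forall x, Iset x -> P (g x) -> Q x) ->
  {ae lebesgue_measure, forall x, Iset x -> P x} ->
  {ae lebesgue_measure, forall x, Iset x -> Q x}.
Proof.
move=> [gI [mg mp]] PQ [N [mN N0 sN]].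
exists (I `&` g @^-1` (N `&` I)); split.
- apply: mg; first exact: mI. exact: measurableI mN mI.
- rewrite mp; first last.
  + by move=> x [].
  + exact: measurableI mN mI.
  apply/eqP; rewrite eq_le measure_ge0 andbT -N0.
  by apply: (@measureIl _ _ _ lebesgue_measure N I mN mI).
- move=> x /= nQ.
  have Ix : Iset x by apply: contrapT => nI; apply: nQ => /nI.
  split => //; split; last exact: gI.
  apply: sN => /= hP; apply: nQ => _; apply: PQ => //; apply: hP; exact: gI.
Qed.


Lemma change_var_ge0 (g : R -> R) (f : R -> \bar R) :
  measure_preserving g -> measurable_fun (I : set R) (f : R -> \bar R) -> (forall x, I x -> (0 <= f x)%E) ->
  (\int[lebesgue_measure]_(x in I) f (g x) = \int[lebesgue_measure]_(x in I) f x)%E.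
Proof.
move=> [gI [mg mp]] mf f0.
pose g' := fun x : R => if x \in I then g x else 2.
have g'I x : I x -> g' x = g x by move=> xI; rewrite /g' mem_set.
have g'N x : ~ I x -> g' x = 2 by move=> xI; rewrite /g' memNset.
have mg' : measurable_fun setT g'.
  move=> _ B mB; rewrite setTI.
  have -> : g' @^-1` B = (I `&` g @^-1` B) `|` (~` I `&` [set _ | B 2]).
    apply/seteqP; split => x /=; case: (pselect (I x)) => xI.
    - by rewrite g'I //; left.
    - by rewrite g'N //; right.
    - by rewrite g'I // => -[[]|[]].
    - by rewrite g'N // => -[[]|[]].
  apply: measurableU; first by apply: mg => //; exact: mI.
  apply: measurableI; first exact: measurableC mI.
  by case: (pselect (B 2)) => h; [rewrite (_ : [set _ | B 2] = setT)|
     rewrite (_ : [set _ | B 2] = set0)] => //; apply/seteqP; split => x //=.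
have preI : g' @^-1` I = I.
  apply/seteqP; split => x /=; case: (pselect (I x)) => xI //.
    by rewrite g'N // => /notI2.
  by rewrite g'I //; exact: gI.
transitivity (\int[lebesgue_measure]_(x in I) f (g' x))%E.
  by apply: eq_integral => x /[!inE] xI; rewrite g'I.
have := @ge0_integral_pushforward _ _ (measurableTypeR R) (measurableTypeR R) R g' mg' lebesgue_measure _ _ mI mf.
rewrite preI => <-; last by move=> y /[!inE]; exact: f0.
pose pm := @measure_function_pushforward__canonical__measure_function_Measure _ _
  (measurableTypeR R) (measurableTypeR R) R lebesgue_measure g' mg'.
change ((\int[pm]_(y in I) f y) = (\int[lebesgue_measure]_(x in I) f x))%E.
apply: (@eq_measure_integral _ (measurableTypeR R) _ I lebesgue_measure pm) => A mA AI.
transitivity (lebesgue_measure (g' @^-1` A)); first by [].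
etransitivity; last exact: (mp A mA AI).
congr (lebesgue_measure _).
apply/seteqP; split => x /=; case: (pselect (I x)) => xI.
- by rewrite g'I.
- by rewrite g'N // => /AI /notI2.
- by rewrite g'I // => -[].
- by case.
Qed.

Lemma change_var (g : R -> R) (h : R -> R) :
  measure_preserving g -> measurable_fun I h ->
  Rintegral lebesgue_measure I (fun x => h (g x)) = Rintegral lebesgue_measure I h.
Proof.
move=> hg mh.
have mh' : measurable_fun (I : set R) (fun x => (h x)%:E : \bar R).
  exact/measurable_EFinP.
rewrite /Rintegral integralE [in RHS]integralE.
congr (fine (_ - _)).
- transitivity (\int[lebesgue_measure]_(x in I) ((fun x => (h x)%:E)^\+) (g x))%E.
    by apply: eq_integral => x _; rewrite !funeposE.
  exact: (change_var_ge0 (f := ((fun x => (h x)%:E)^\+)%E) hg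
    (measurable_funepos mh') (fun x _ => funepos_ge0 (fun x => (h x)%:E) x)).
- transitivity (\int[lebesgue_measure]_(x in I) ((fun x => (h x)%:E)^\-) (g x))%E.
    by apply: eq_integral => x _; rewrite !funenegE.
  exact: (change_var_ge0 (f := ((fun x => (h x)%:E)^\-)%E) hg
    (measurable_funeneg mh') (fun x _ => funeneg_ge0 (fun x => (h x)%:E) x)).
Qed.

Lemma sin_contT (u : R) : contT (fun v : R => sin (v - u)).
Proof.
split.
  move=> x; apply: continuous_comp; last exact: continuous_sin.
  by apply: cvgB; [exact: cvg_id|exact: cvg_cst].
move=> z; rewrite /period.
have -> : z + 2 * pi - u = (z - u) + pi *+ 2 by rewrite -mulr_natl; ring.
exact: sinD2pi.
Qed.

Lemma Phi_meas (nu : R -> Meas R) (f : R -> R) :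
  in_MI nu -> contT f -> measurable_fun I (fun y => Rintegral (nu y) setT f).
Proof.
move=> [_ hnu] cf.
apply: (measurability _ (RGenOInfty.measurableE R)) => //.
move=> /= _ [_ [a ->] <-].
have -> : I `&` (fun y => Rintegral (nu y) setT f) @^-1` `]a, +oo[%classic
    = I `&` nu @^-1` [set P | a < Rintegral P setT f].
  by apply/seteqP; split => x /= [Ix]; rewrite in_itv /= andbT.
apply: hnu => P _ SP.
exists [:: f], (Rintegral P setT f - a); split; first by rewrite subr_gt0.
split; first by move=> f'; rewrite mem_seq1 => /eqP ->.
move=> Q _ /(_ f (mem_head _ _)); rewrite ltr_norml => /andP[h1 h2] /=.
lra.
Qed.

Lemma W_sec (W : R -> R -> R) (c : R) :
  graphon W -> I c -> measurable_fun I (W c).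
Proof.
move=> [mW _] Ic.
have := @measurable_comp _ _ _ _ _ _ (I `*` I) (fun p : R * R => W p.1 p.2) I (pair c)
  (measurableX mI mI) _ mW (measurable_funTS (pair1_measurable c)).
apply.
by move=> _ [y Iy <-]; split.
Qed.

Lemma vfield_eq (W : R -> R -> R) (g : R -> R) (mu : R -> R -> Meas R) (x : R) :
  graphon W -> measure_preserving g ->
  (forall x y, I x -> I y -> W (g x) (g y) = W x y) ->
  (forall t, in_MI (fun y => mu y t)) -> I x ->
  vfield W (fun y t => mu (g y) t) x = vfield W mu (g x).
Proof.
move=> hW hg hinv hmu Ix.
apply/funext => t; apply/funext => u; rewrite /vfield.
pose h := fun y => W (g x) y * Rintegral (mu y t) setT (fun v => sin (v - u)).
transitivity (Rintegral lebesgue_measure I (fun y => h (g y))).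
  apply: eq_Rintegral => y /[!inE] Iy.
  by rewrite /h hinv.
apply: change_var => //.
apply: measurable_funM.
  apply: W_sec => //; exact: hg.1.
exact: Phi_meas (hmu t) (sin_contT u).
Qed.

End H.

Theorem theorem7p2 (R : realType) (W : R -> R -> R) (g : R -> R) :
  graphon W ->
  measure_preserving g ->
  (forall x y, Iset x -> Iset y -> W (g x) (g y) = W x y) ->
  (forall mu : R -> Meas R, in_MI mu -> in_MI (fun x => mu (g x))) /\
  (forall (mu0 : R -> Meas R) (mu : R -> R -> Meas R),
      mfg_solution W mu0 mu ->
      mfg_solution W (fun x => mu0 (g x)) (fun x t => mu (g x) t)).
Proof.
move=> hW hg hinv.
have part1 : forall mu : R -> Meas R, in_MI mu -> in_MI (fun x => mu (g x)).
  by move=> mu; exact: in_MI_comp.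
split => // mu0 mu [h0 [ht [hc [hae hfl]]]].
split; first exact: part1.
split; first by move=> t; exact: (part1 _ (ht t)).
split; first by move=> x Ix f cf; exact: hc (g x) (hg.1 x Ix) f cf.
split.
  by apply: (ae_comp (P := fun x => mu x 0 = mu0 x) hg) => // x Ix.
move=> t.
apply: (ae_comp hg _ (hfl t)) => // x Ix [Phi [hPhi hA]].
exists Phi; split => // u0.
by rewrite /flow_at /is_traj (vfield_eq hW hg hinv ht Ix); exact: hPhi.
Qed.
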